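(* Let $(\Omega,\Sigma,\mu)$ and $(\Delta,\Gamma,\nu)$ be $\sigma$-finite measure spaces, let $X_1(\mu),X_2(\mu)$ be saturated Banach function spaces over $\mu$ and $Y_1(\nu),Y_2(\nu)$ saturated Banach function spaces over $\nu$, and let $T\colon X_1(\mu)\to Y_1(\nu)$ and $S\colon X_2(\mu)\to Y_2(\nu)$ be nontrivial continuous linear operators. Assume that $Y_2^{Y_1''}$ is saturated and let $h\in X_1^{X_2}$. The following are equivalent: (a) There exists a constant $C>0$ such that $$\sum_{i=1}^n\int T(x_i)y_i'\,d\nu\le C\Big\Vert\sum_{i=1}^nS(hx_i)y_i'\Big\Vert_{Y_2\pi Y_1'}$$ for every $n\in\mathbb{N}$, all $x_1,\dots,x_n\in X_1(\mu)$ and all $y_1',\dots,y_n'\in Y_1(\nu)'$. (b) There exists $\xi^*\in(Y_2\pi Y_1')^*$ such that $\eta(T(x))=R_{\xi^*}(S(hx))$ for all $x\in X_1(\mu)$, where $\eta\colon Y_1(\nu)''\to (Y_1(\nu)')^*$ is given by $\langle\eta(f),y'\rangle=\int fy'\,d\nu$ (and $T(x)\in Y_1(\nu)\subset Y_1(\nu)''$), and $R_{\xi^*}\colon Y_2(\nu)\to (Y_1(\nu)')^*$ is the continuous linear operator defined by $\langle R_{\xi^*}(y_2),y_1'\rangle=\langle\xi^*,y_2y_1'\rangle$ for $y_2\in Y_2(\nu)$, $y_1'\in Y_1(\nu)'$.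
   Context: $L^0(\mu)$ denotes the space of ($\mu$-a.e. classes of) measurable real functions. A Banach function space $X(\mu)$ is a Banach space $X(\mu)\subset L^0(\mu)$ with norm $\Vert\cdot\Vert_X$ such that if $f\in L^0(\mu)$, $g\in X(\mu)$ and $|f|\le|g|$ $\mu$-a.e., then $f\in X(\mu)$ and $\Vert f\Vert_X\le\Vert g\Vert_X$. It is saturated if there is no $A\in\Sigma$ with $\mu(A)>0$ and $f\chi_A=0$ a.e. for all $f\in X(\mu)$. For Banach function spaces $X(\mu),Y(\mu)$, the $Y$-dual is $X^Y=\{h\in L^0(\mu): fh\in Y(\mu)\ \forall f\in X(\mu)\}$ with norm $\Vert h\Vert_{X^Y}=\sup_{f\in B_X}\Vert hf\Vert_Y$; the Köthe dual is $X(\mu)'=X^{L^1(\mu)}$ and the Köthe bidual is $X(\mu)''=(X(\mu)')'$ (a saturated $X(\mu)$ is contained in $X(\mu)''$). The $\pi$-product space $X\pi Y$ consists of all $h\in L^0(\mu)$ with $|h|\le\sum_n|f_ng_n|$ a.e. for some $(f_n)\subset X(\mu)$, $(g_n)\subset Y(\mu)$ with $\sum_n\Vert f_n\Vert_X\Vert g_n\Vert_Y<\infty$, normed by $\pi(h)=\inf\sum_n\Vert f_n\Vert_X\Vert g_n\Vert_Y$ over all such representations; $(Y_2\pi Y_1')^*$ is its topological dual. $B_X$ is the closed unit ball. *)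

(* Defs.v *)
From HB Require Import structures.
From mathcomp Require Import all_boot all_order all_algebra.
From mathcomp Require Import all_classical all_reals all_analysis.
Set Implicit Arguments. Unset Strict Implicit. Unset Printing Implicit Defensive.
Import Order.TTheory GRing.Theory Num.Theory.
Import numFieldNormedType.Exports.
Local Open Scope classical_set_scope.
Local Open Scope ring_scope.

(* Functions are handled through representatives; all notions below are
   invariant under mu-a.e. equality (for Banach function spaces this is
   forced by the lattice axiom). *)
Record fspace (R : realType) (T : Type) := FSpace {
  fs_mem : set (T -> R);
  fs_norm : (T -> R) -> \bar R }.

Section defs.
Context {R : realType}.

Section one_space.
Context {d : measure_display} {T : measurableType d}
  (mu : {measure set T -> \bar R}).

Definition is_bfs (X : fspace R T) : Prop :=
  let N := fs_norm X in let M := fs_mem X in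
  (forall f, M f -> measurable_fun setT f) /\
      (forall f, M f -> (0 <= N f)%E /\ (N f < +oo)%E) /\
      (forall f g, M f -> M g -> M (fun x => f x + g x)) /\
      (forall (a : R) f, M f -> M (fun x => a * f x)) /\
      (forall f, M f -> (N f = 0%E <-> {ae mu, forall x, f x = 0})) /\
      (forall (a : R) f, M f -> N (fun x => a * f x) = ((`|a|%R)%:E * N f)%E) /\
      (forall f g, M f -> M g -> (N (fun x => (f x + g x)%R) <= N f + N g)%E) /\
      (forall (f g : T -> R), measurable_fun setT f -> M g ->
         {ae mu, forall x, `|f x| <= `|g x|} -> M f /\ (N f <= N g)%E) /\
      (forall u : nat -> T -> R, (forall n, M (u n)) ->
         (forall e : R, 0 < e -> exists n0, forall m n, (n0 <= m)%N -> (n0 <= n)%N ->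
            (N (fun x => (u n x - u m x)%R) < e%:E)%E) ->
         exists f, M f /\ forall e : R, 0 < e -> exists n0, forall n, (n0 <= n)%N ->
            (N (fun x => (u n x - f x)%R) < e%:E)%E).

Definition saturated (X : fspace R T) : Prop :=
  forall A, measurable A ->
    (forall f, fs_mem X f -> {ae mu, forall x, f x * \1_A x = 0}) -> mu A = 0%E.

Definition L1 : fspace R T :=
  FSpace (fun f => measurable_fun setT f /\ (\int[mu]_x (`|f x|%R)%:E < +oo)%E)
         (fun f => (\int[mu]_x (`|f x|%R)%:E)%E).

Definition ydual (X Y : fspace R T) : fspace R T :=
  FSpace (fun h => measurable_fun setT h /\
                   forall f, fs_mem X f -> fs_mem Y (fun x => h x * f x))
         (fun h => ereal_sup [set fs_norm Y (fun x => h x * f x) | f in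
                      [set f | fs_mem X f /\ (fs_norm X f <= 1)%E]]).

Definition kdual (X : fspace R T) : fspace R T := ydual X L1.

Definition pi_norm (X Y : fspace R T) (h : T -> R) : \bar R :=
  ereal_inf [set (\sum_(0 <= n <oo) (fs_norm X (fg.1 n) * fs_norm Y (fg.2 n)))%E |
     fg in [set fg : (nat -> T -> R) * (nat -> T -> R) |
       (forall n, fs_mem X (fg.1 n)) /\ (forall n, fs_mem Y (fg.2 n)) /\
       {ae mu, forall x, ((`|h x|%R)%:E <=
            \sum_(0 <= n <oo) (`|fg.1 n x * fg.2 n x|%R)%:E)%E}]].

Definition piprod (X Y : fspace R T) : fspace R T :=
  FSpace (fun h => measurable_fun setT h /\ (pi_norm X Y h < +oo)%E)
         (pi_norm X Y).

Definition dual_elem (P : fspace R T) (xi : (T -> R) -> R) : Prop :=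
  (forall (a b : R) f g, fs_mem P f -> fs_mem P g ->
      xi (fun x => a * f x + b * g x) = a * xi f + b * xi g) /\
  exists C : R, forall f, fs_mem P f -> ((`|xi f|%R)%:E <= C%:E * fs_norm P f)%E.

End one_space.

Section operators.
Context {d1 d2 : measure_display} {T1 : measurableType d1}
  {T2 : measurableType d2}
  (mu : {measure set T1 -> \bar R}) (nu : {measure set T2 -> \bar R}).

Definition is_clop (X : fspace R T1) (Y : fspace R T2)
    (Op : (T1 -> R) -> (T2 -> R)) : Prop :=
  [/\ (forall f, fs_mem X f -> fs_mem Y (Op f)),
      (forall f g, fs_mem X f -> fs_mem X g -> {ae mu, forall x, f x = g x} ->
          {ae nu, forall y, Op f y = Op g y}),
      (forall (a b : R) f g, fs_mem X f -> fs_mem X g ->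
          {ae nu, forall y, Op (fun x => a * f x + b * g x) y =
                            a * Op f y + b * Op g y}) &
      exists C : R, forall f, fs_mem X f ->
          (fs_norm Y (Op f) <= C%:E * fs_norm X f)%E].

Definition nontrivial_op (X : fspace R T1) (Op : (T1 -> R) -> (T2 -> R)) : Prop :=
  exists f, fs_mem X f /\ ~ {ae nu, forall y, Op f y = 0}.

End operators.

Section maps.
Context {d : measure_display} {T : measurableType d}
  (nu : {measure set T -> \bar R}).

Definition eta_map (f : T -> R) : (T -> R) -> R :=
  fun y' => Rintegral nu setT (fun x => f x * y' x).

Definition Rxi (xi : (T -> R) -> R) (y2 : T -> R) : (T -> R) -> R :=
  fun y1' => xi (fun x => y2 x * y1' x).

End maps.
End defs.

(* Main.v *)
Require Import Defs.
From HB Require Import structures.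
From mathcomp Require Import all_boot all_order all_algebra.
From mathcomp Require Import all_classical all_reals all_analysis.
From mathcomp Require Import ring lra measurable_realfun.
Import Order.TTheory GRing.Theory Num.Theory.
Import numFieldNormedType.Exports.
Local Open Scope classical_set_scope.
Local Open Scope ring_scope.

Section HBsec.
Variables (R : realType) (D : Type).
Local Notation F := (D -> R).
Definition comb (a : R) (f : F) (b : R) (g : F) : F := fun x => a * f x + b * g x.
Variables (V : set F) (p : F -> R).
Hypothesis Vcomb : forall a b f g, V f -> V g -> V (comb a f b g).
Hypothesis p_sub : forall f g, V f -> V g -> p (fun x => f x + g x) <= p f + p g.
Hypothesis p_hom : forall (t : R) f, 0 < t -> V f -> p (fun x => t * f x) = t * p f.

Definition good (G : set (F * R)) :=
 [/\ forall fa, G fa -> V fa.1,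
     forall a b fa gb, G fa -> G gb -> G (comb a fa.1 b gb.1, a * fa.2 + b * gb.2) &
     forall fa, G fa -> fa.2 <= p fa.1].

Let z : F := fun _ => 0.

Lemma Vz f : V f -> V z.
Proof.
move=> Vf; have := Vcomb 0 0 _ _ Vf Vf.
by rewrite (_ : comb _ _ _ _ = z) // /comb; apply/funext => x; rewrite !mul0r addr0.
Qed.

Lemma pz f : V f -> p z = 0.
Proof.
move=> /Vz Vz0; have := p_hom 2 _ (ltr0Sn _ 1) Vz0.
rewrite (_ : (fun x => 2 * z x) = z); last by apply/funext => x; rewrite /z mulr0.
lra.
Qed.

Lemma good_fun G f a b : good G -> G (f, a) -> G (f, b) -> a = b.
Proof.
move=> [GV Gc Gp] Ga Gb.
have Vf := GV _ Ga.
have e : comb 1 f (-1) f = z by apply/funext => x; rewrite /comb /z; ring.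
have h1 := Gp _ (Gc 1 (-1) _ _ Ga Gb); rewrite /= e (pz _ Vf) in h1.
have h2 := Gp _ (Gc 1 (-1) _ _ Gb Ga); rewrite /= e (pz _ Vf) in h2.
lra.
Qed.

Variable G0 : set (F * R).
Hypothesis goodG0 : good G0.
Hypothesis G0n : exists fa, G0 fa.

Lemma HB_ext : exists xi : F -> R,
  [/\ forall a b f g, V f -> V g -> xi (comb a f b g) = a * xi f + b * xi g,
      forall f, V f -> xi f <= p f &
      forall fa, G0 fa -> xi fa.1 = fa.2].
Proof.
pose P' := fun A : set (F * R) => good (A `|` G0).
have chainP : forall Fam : set (set (F * R)), Fam `<=` P' -> total_on Fam subset ->
    P' (\bigcup_(X in Fam) X).
  move=> Fam FP tot.
  have common : forall fa gb, ((\bigcup_(X in Fam) X) `|` G0) fa ->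
      ((\bigcup_(X in Fam) X) `|` G0) gb -> exists Z,
      [/\ good Z, Z `<=` (\bigcup_(X in Fam) X) `|` G0, Z fa & Z gb].
    move=> fa gb [[X FX Xfa]|G0fa] [[Y FY Ygb]|G0gb].
    - have [XY|YX] := tot _ _ FX FY.
      + exists (Y `|` G0); split; [exact: FP|
          by move=> q [Yq|Gq]; [left; exists Y|right]|left; exact: XY|by left].
      + exists (X `|` G0); split; [exact: FP|
          by move=> q [Xq|Gq]; [left; exists X|right]|by left|left; exact: YX].
    - exists (X `|` G0); split; [exact: FP|
        by move=> q [Xq|Gq]; [left; exists X|right]|by left|by right].
    - exists (Y `|` G0); split; [exact: FP|
        by move=> q [Yq|Gq]; [left; exists Y|right]|by right|by left].
    - exists G0; split => //; by move=> q Gq; right.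
  split.
  - move=> fa Hfa; have [Z [[GV _ _] _ Zfa _]] := common _ _ Hfa Hfa; exact: GV.
  - move=> a b fa gb Hfa Hgb; have [Z [[_ Gc _] ZU Zfa Zgb]] := common _ _ Hfa Hgb.
    exact/ZU/Gc.
  - move=> fa Hfa; have [Z [[_ _ Gp] _ Zfa _]] := common _ _ Hfa Hfa; exact: Gp.
have [A [PA Amax]] := Zorn_bigcup chainP.
set M := A `|` G0.
have gM : good M := PA.
have G0M : G0 `<=` M by move=> q; right.
have [GV Gc Gp] := gM.
have total : forall f, V f -> exists a, M (f, a).
  move=> f0 Vf0; apply: contrapT => nM.
  have [[g0 a0] G0a0] := G0n.
  have Ma0 : M (g0, a0) by right.
  have Vsub : forall g, V g -> V (fun x => g x - f0 x).
    move=> g Vg; have := Vcomb 1 (-1) _ _ Vg Vf0.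
    by rewrite (_ : comb _ _ _ _ = (fun x => g x - f0 x)) // /comb;
      apply/funext => x; ring.
  have Vadd : forall g (t : R), V g -> V (fun x => g x + t * f0 x).
    move=> g t Vg; have := Vcomb 1 t _ _ Vg Vf0.
    by rewrite (_ : comb _ _ _ _ = (fun x => g x + t * f0 x)) // /comb;
      apply/funext => x; ring.
  have key : forall g a g' a', M (g, a) -> M (g', a') ->
      a - p (fun x => g x - f0 x) <= p (fun x => g' x + 1 * f0 x) - a'.
    move=> g a g' a' Ma Ma'.
    have := Gp _ (Gc 1 1 _ _ Ma Ma'); rewrite /=.
    rewrite (_ : comb 1 g 1 g' = fun x => (g x - f0 x) + (g' x + 1 * f0 x)); last first.
      by rewrite /comb; apply/funext => x; ring.
    have := p_sub _ _ (Vsub _ (GV _ Ma)) (Vadd g' 1 (GV _ Ma')).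
    lra.
  pose L := [set r | exists g a, M (g, a) /\ r = a - p (fun x => g x - f0 x)].
  pose c := sup L.
  have Ln : L !=set0 by exists (a0 - p (fun x => g0 x - f0 x)); exists g0, a0.
  have hub : has_ubound L.
    exists (p (fun x => g0 x + 1 * f0 x) - a0) => _ [g [a [Ma ->]]].
    exact: key.
  have cge : forall g a, M (g, a) -> a - p (fun x => g x - f0 x) <= c.
    by move=> g a Ma; apply: ub_le_sup => //; exists g, a.
  have cle : forall g a, M (g, a) -> c <= p (fun x => g x + 1 * f0 x) - a.
    move=> g a Ma; apply: ge_sup => // _ [g' [a' [Ma' ->]]]; exact: key.
  pose M' := [set q | exists g a t, M (g, a) /\
                 q = ((fun x => g x + t * f0 x), a + t * c)].
  have MM' : M `<=` M'.
    move=> [g a] Ma; exists g, a, 0; split => //.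
    by congr pair; [apply/funext => x|]; rewrite mul0r addr0.
  have gM' : good M'.
    split.
    - by move=> _ [g [a [t [Ma ->]]]] /=; apply: Vadd; exact: GV _ Ma.
    - move=> al be _ _ [g [a [t [Ma ->]]]] [g' [a' [t' [Ma' ->]]]] /=.
      exists (comb al g be g'), (al * a + be * a'), (al * t + be * t'); split.
        exact: (Gc al be _ _ Ma Ma').
      by congr pair; [apply/funext => x; rewrite /comb|]; ring.
    - move=> _ [g [a [t [Ma ->]]]] /=.
      have [tpos|tneg|->] := ltrgt0P t.
      + have Mt := Gc (t^-1) 0 _ _ Ma Ma; rewrite /= in Mt.
        have h1 := cle _ _ Mt.
        pose k := (fun x => comb t^-1 g 0 g x + 1 * f0 x).
        have Vk : V k by apply: Vadd; apply: Vcomb; exact: GV _ Ma.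
        have := p_hom t k tpos Vk.
        rewrite (_ : (fun x => t * k x) = fun x => g x + t * f0 x); last first.
          apply/funext => x; rewrite /k /comb; field.
          by rewrite gt_eqF.
        move=> ->.
        have : t * c <= t * (p k - (t^-1 * a + 0 * a)) by rewrite ler_pM2l.
        rewrite mulrBr mulrDr mul0r mulr0 addr0 mulrA mulfV ?gt_eqF // mul1r.
        lra.
      + pose s := - t.
        have spos : 0 < s by rewrite /s oppr_gt0.
        have Mt := Gc (s^-1) 0 _ _ Ma Ma; rewrite /= in Mt.
        have h1 := cge _ _ Mt.
        pose k := (fun x => comb s^-1 g 0 g x - f0 x).
        have Vk : V k by apply: Vsub; apply: Vcomb; exact: GV _ Ma.
        have := p_hom s k spos Vk.
        rewrite (_ : (fun x => s * k x) = fun x => g x + t * f0 x); last first.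
          apply/funext => x; rewrite /k /comb /s; field.
          by rewrite ?oppr_eq0 lt_eqF.
        move=> ->.
        have : s * (s^-1 * a + 0 * a - p k) <= s * c by rewrite ler_pM2l.
        rewrite mulrBr mulrDr mul0r mulr0 addr0 mulrA mulfV ?gt_eqF // mul1r.
        rewrite /s; lra.
      + rewrite mul0r addr0 (_ : (fun x => g x + 0 * f0 x) = g); first exact: Gp _ Ma.
        by apply/funext => x; rewrite mul0r addr0.
  have G0M' : M' `|` G0 = M'.
    by apply/seteqP; split => [q [//|/G0M/MM']|q Mq]; [|left].
  apply: (Amax M'); last by rewrite /P' G0M'.
  split; first by move=> q Aq; apply: MM'; left.
  move=> M'A.
  have Mz := Gc 0 0 _ _ Ma0 Ma0; rewrite /= in Mz.
  have : M' (fun x => comb 0 g0 0 g0 x + 1 * f0 x, (0 * a0 + 0 * a0) + 1 * c).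
    by exists (comb 0 g0 0 g0), (0 * a0 + 0 * a0), 1.
  move=> /M'A HA; apply: nM; exists (0 * a0 + 0 * a0 + 1 * c).
  rewrite (_ : f0 = (fun x => comb 0 g0 0 g0 x + 1 * f0 x)); first by left.
  by apply/funext => x; rewrite /comb; ring.
pose xi f := if pselect (exists a, M (f, a)) is left e then projT1 (cid e) else 0.
have xiM : forall f, V f -> M (f, xi f).
  move=> f Vf; rewrite /xi; case: pselect => [e|ne]; first exact: projT2 (cid e).
  by exfalso; apply: ne; exact: total.
exists xi; split.
- move=> a b f g Vf Vg.
  apply: (good_fun _ _ _ _ gM (xiM _ (Vcomb a b _ _ Vf Vg))).
  exact: (Gc a b _ _ (xiM _ Vf) (xiM _ Vg)).
- by move=> f Vf; exact: Gp _ (xiM _ Vf).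
- move=> [f a] G0fa /=.
  have Vf : V f by exact: GV (f, a) (G0M _ G0fa).
  exact: good_fun _ _ _ _ gM (xiM _ Vf) (G0M _ G0fa).
Qed.

End HBsec.


Section interleave.
Context {R : realType}.
Local Open Scope ereal_scope.

Lemma interleave (u a b : nat -> \bar R) :
  (forall n, u n.*2 = a n) -> (forall n, u n.*2.+1 = b n) ->
  (forall n, 0 <= a n) -> (forall n, 0 <= b n) ->
  \sum_(0 <= k <oo) u k = \sum_(0 <= k <oo) a k + \sum_(0 <= k <oo) b k.
Proof.
move=> ua ub a0 b0.
have u0 : forall n, 0 <= u n.
  by move=> n; rewrite -[n]odd_double_half; case: (odd n) => /=;
    rewrite ?add0n ?add1n ?ua ?ub.
have part : forall N, \sum_(0 <= k < N.*2) u k =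
    \sum_(0 <= k < N) a k + \sum_(0 <= k < N) b k.
  elim=> [|N IH]; first by rewrite !big_geq// adde0.
  rewrite doubleS !big_nat_recr //= IH ua ub.
  by rewrite -!addeA; congr (_ + _); rewrite addeCA.
apply/eqP; rewrite eq_le; apply/andP; split.
  apply: lime_le; first exact: is_cvg_nneseries.
  apply: nearW => M.
  apply: (@le_trans _ _ (\sum_(0 <= k < M.*2) u k)).
    apply: ereal_nondecreasing_series => [n _ _|]; first exact: u0.
    by rewrite -addnn leq_addr.
  by rewrite part; apply: leeD; apply: nneseries_lim_ge.
rewrite -nneseriesD //.
apply: lime_le; first by apply: is_cvg_nneseries => n _ _; exact: adde_ge0.
apply: nearW => N; rewrite big_split /= -part.
by apply: nneseries_lim_ge => n _ _; exact: u0.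
Qed.
End interleave.

Section pi.
Context {R : realType} {d : measure_display} {T : measurableType d}
  (mu : {measure set T -> \bar R}).
Variables (A B : fspace R T).
Hypothesis A0 : forall f, fs_mem A f -> (0 <= fs_norm A f)%E.
Hypothesis B0 : forall g, fs_mem B g -> (0 <= fs_norm B g)%E.
Hypothesis Az : fs_mem A (fun _ => 0) /\ fs_norm A (fun _ => 0) = 0%E.
Hypothesis Bn : exists g, fs_mem B g.
Hypothesis As : forall (a : R) f, fs_mem A f ->
  fs_mem A (fun x => a * f x) /\ fs_norm A (fun x => a * f x) = (`|a|%:E * fs_norm A f)%E.

Definition reps (h : T -> R) :=
  [set fg : (nat -> T -> R) * (nat -> T -> R) |
       (forall n, fs_mem A (fg.1 n)) /\ (forall n, fs_mem B (fg.2 n)) /\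
       {ae mu, forall x, ((`|h x|%R)%:E <=
            \sum_(0 <= n <oo) (`|fg.1 n x * fg.2 n x|%R)%:E)%E}].
Definition rsum (fg : (nat -> T -> R) * (nat -> T -> R)) :=
  (\sum_(0 <= n <oo) (fs_norm A (fg.1 n) * fs_norm B (fg.2 n)))%E.

Local Notation pin := (pi_norm mu A B).

Lemma piE h : pin h = ereal_inf [set rsum fg | fg in reps h].
Proof. by []. Qed.

Lemma rsum_ge0 h fg : reps h fg -> (0 <= rsum fg)%E.
Proof.
move=> [HA [HB _]]; apply: nneseries_ge0 => n _ _.
by apply: mule_ge0; [exact: A0|exact: B0].
Qed.

Lemma pn_ge0 h : (0 <= pin h)%E.
Proof. by apply: le_ereal_inf_tmp => _ [fg Hfg <-]; exact: rsum_ge0 Hfg. Qed.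

Lemma pn_le_rep h fg : reps h fg -> (pin h <= rsum fg)%E.
Proof. by move=> Hfg; apply: ereal_inf_lbound; exists fg. Qed.

Lemma pn_le_ae h1 h2 : {ae mu, forall x, `|h1 x| <= `|h2 x|} -> (pin h1 <= pin h2)%E.
Proof.
move=> H12; apply: le_ereal_inf_tmp => _ [fg [HA [HB Hae]] <-].
apply: pn_le_rep; split => //; split => //.
apply: filterS2 H12 Hae => x h12 hae; apply: le_trans hae.
by rewrite lee_fin.
Qed.

Lemma pn_zero : pin (fun _ => 0) = 0%E.
Proof.
apply/eqP; rewrite eq_le pn_ge0 andbT.
have [g Bg] := Bn.
apply: (@le_trans _ _ (rsum (fun _ => fun _ => 0, fun _ => g))).
  apply: pn_le_rep; split; first by move=> n; exact: Az.1.
  split => //; apply: nearW => x /=; rewrite normr0.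
  by apply: nneseries_ge0 => n _ _; rewrite lee_fin.
by rewrite /rsum /= Az.2 eseries0 // => i _ _; rewrite mul0e.
Qed.

Lemma pn_single f g : fs_mem A f -> fs_mem B g ->
  (pin (fun x => (f x * g x)%R) <= fs_norm A f * fs_norm B g)%E.
Proof.
move=> Af Bg.
pose fg := (fun n : nat => if n == 0%N then f else (fun _ : T => 0), fun _ : nat => g).
apply: (@le_trans _ _ (rsum fg)).
  apply: pn_le_rep; split.
    by move=> [|n] //=; exact: Az.1.
  split => //; apply: nearW => x.
  apply: le_trans (nneseries_lim_ge 1 _) => //.
  by rewrite big_nat1.
rewrite /rsum (nneseries_split 0 1); last first.
  move=> k _; rewrite /fg /=; apply: mule_ge0; last exact: B0.
  by case: (k == 0%N); [exact: A0|exact: A0 _ Az.1].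
rewrite add0n big_nat1 /= eseries0 ?adde0 // => i /= i1 _.
by case: i i1 => // i _; rewrite /= Az.2 mul0e.
Qed.

Lemma pn_scale_gen h h' (c : R) : 0 < c ->
  (forall fg, reps h fg -> (pin h' <= c%:E * rsum fg)%E) ->
  (pin h' <= c%:E * pin h)%E.
Proof.
move=> c0 H; rewrite -lee_pdivrMl //.
apply: le_ereal_inf_tmp => _ [fg Hfg <-]; rewrite lee_pdivrMl //; exact: H.
Qed.

Lemma pn_scale (a : R) h : (pin (fun x => (a * h x)%R) <= (`|a|)%:E * pin h)%E.
Proof.
have [->|a0] := eqVneq a 0.
  rewrite normr0 mul0e -pn_zero; apply: pn_le_ae; apply: nearW => x.
  by rewrite mul0r.
apply: pn_scale_gen; first by rewrite normr_gt0.
move=> fg [HA [HB Hae]].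
pose fg' := (fun n => fun x => a * fg.1 n x, fg.2).
apply: (@le_trans _ _ (rsum fg')); last first.
  rewrite /rsum -nneseriesZl; last first.
    by move=> i _; apply: mule_ge0; [exact: A0|exact: B0].
  apply: lee_nneseries => [i _ _|n _]; rewrite /fg' /=.
    by apply: mule_ge0; [exact: (A0 _ (As a _ (HA i)).1)|exact: B0].
  by rewrite /= (As a _ (HA n)).2 muleA.
apply: pn_le_rep; split; first by move=> n; exact: (As a _ (HA n)).1.
split => //; apply: filterS Hae => x hx /=.
rewrite normrM EFinM.
under eq_eseriesr do rewrite -mulrA normrM EFinM.
rewrite nneseriesZl //; first by apply: lee_wpmul2l => //; rewrite lee_fin.
Qed.

Lemma pn_add h1 h2 : (pin (fun x => (h1 x + h2 x)%R) <= pin h1 + pin h2)%E.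
Proof.
have [->|h1f] := eqVneq (pin h1) +oo%E.
  by rewrite addye ?leey // gt_eqF // (lt_le_trans _ (pn_ge0 h2)).
have [->|h2f] := eqVneq (pin h2) +oo%E.
  by rewrite addey ?leey // gt_eqF // (lt_le_trans _ (pn_ge0 h1)).
have f1 : pin h1 \is a fin_num by rewrite ge0_fin_numE ?pn_ge0 // lt_neqAle h1f leey.
have f2 : pin h2 \is a fin_num by rewrite ge0_fin_numE ?pn_ge0 // lt_neqAle h2f leey.
apply/lee_addgt0Pr => e e0.
have e20 : 0 < e / 2 by rewrite divr_gt0.
have l1 : (pin h1 < pin h1 + (e / 2)%:E)%E by rewrite lteDl // lte_fin.
have [_ [fg1 R1 <-] lt1] := ereal_inf_lt l1.
have l2 : (pin h2 < pin h2 + (e / 2)%:E)%E by rewrite lteDl // lte_fin.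
have [_ [fg2 R2 <-] lt2] := ereal_inf_lt l2.
case: R1 => [HA1 [HB1 Hae1]]; case: R2 => [HA2 [HB2 Hae2]].
pose fg := (fun n => if odd n then fg2.1 n./2 else fg1.1 n./2,
            fun n => if odd n then fg2.2 n./2 else fg1.2 n./2).
have Hfg : reps (fun x => h1 x + h2 x) fg.
  split; first by move=> n /=; case: ifP.
  split; first by move=> n /=; case: ifP.
  apply: filterS2 Hae1 Hae2 => x hx1 hx2.
  rewrite (@interleave _ _ (fun n => (`|fg1.1 n x * fg1.2 n x|)%:E)
                      (fun n => (`|fg2.1 n x * fg2.2 n x|)%:E)) //.
  - apply: le_trans (leeD hx1 hx2); rewrite -EFinD lee_fin; exact: ler_normD.
  - by move=> n /=; rewrite odd_double doubleK.
  - by move=> n /=; rewrite odd_double /= uphalf_double.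
have := pn_le_rep _ _ Hfg.
rewrite /rsum (@interleave _ _ (fun n => (fs_norm A (fg1.1 n) * fs_norm B (fg1.2 n))%E)
          (fun n => (fs_norm A (fg2.1 n) * fs_norm B (fg2.2 n))%E)).
- move=> H; apply: (le_trans H).
  have := leeD (ltW lt1) (ltW lt2).
  move/le_trans; apply.
  rewrite addeACA -EFinD; apply: leeD => //; rewrite lee_fin; lra.
- by move=> n /=; rewrite odd_double doubleK.
- by move=> n /=; rewrite odd_double /= uphalf_double.
- by move=> n; apply: mule_ge0; [exact: A0|exact: B0].
- by move=> n; apply: mule_ge0; [exact: A0|exact: B0].
Qed.

End pi.

Set Implicit Arguments. Unset Strict Implicit.

Section meas.
Context {R : realType} {d : measure_display} {T : measurableType d}.
Lemma mcomb (a b : R) (f g : T -> R) : measurable_fun setT f -> measurable_fun setT g ->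
  measurable_fun setT (fun x => a * f x + b * g x).
Proof.
move=> mf mg; apply: measurable_funD; apply: measurable_funM => //; exact: measurable_cst.
Qed.
Lemma mmul (f g : T -> R) : measurable_fun setT f -> measurable_fun setT g ->
  measurable_fun setT (fun x => f x * g x).
Proof. by move=> mf mg; apply: measurable_funM. Qed.
Lemma mabs (f : T -> R) : measurable_fun setT f -> measurable_fun setT (fun x => `|f x|).
Proof. move=> mf; have := measurableT_comp (@normr_measurable R setT) mf; exact. Qed.
Lemma mEabs (f : T -> R) : measurable_fun setT f ->
  measurable_fun setT (fun x => (`|f x|)%:E).
Proof. by move=> mf; apply/measurable_EFinP; exact: mabs. Qed.
End meas.

Section bfs.
Context {R : realType} {d : measure_display} {T : measurableType d}
  (mu : {measure set T -> \bar R}).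
Variable Y : fspace R T.
Hypothesis bY : is_bfs mu Y.
Local Notation M := (fs_mem Y).
Local Notation N := (fs_norm Y).

Lemma Ymeas f : M f -> measurable_fun setT f. Proof. exact: bY.1. Qed.
Lemma Yge0 f : M f -> (0 <= N f)%E. Proof. by move=> /(bY.2.1 f) []. Qed.
Lemma Yfin f : M f -> (N f < +oo)%E. Proof. by move=> /(bY.2.1 f) []. Qed.
Lemma Yadd f g : M f -> M g -> M (fun x => f x + g x). Proof. exact: bY.2.2.1. Qed.
Lemma Yscale (a : R) f : M f -> M (fun x => a * f x). Proof. exact: bY.2.2.2.1. Qed.
Lemma Yzero f : M f -> (N f = 0%E <-> {ae mu, forall x, f x = 0}).
Proof. exact: bY.2.2.2.2.1. Qed.
Lemma Yhom (a : R) f : M f -> N (fun x => a * f x) = ((`|a|%R)%:E * N f)%E.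
Proof. exact: bY.2.2.2.2.2.1. Qed.
Lemma Ytri f g : M f -> M g -> (N (fun x => (f x + g x)%R) <= N f + N g)%E.
Proof. exact: bY.2.2.2.2.2.2.1. Qed.
Lemma Yideal (f g : T -> R) : measurable_fun setT f -> M g ->
  {ae mu, forall x, `|f x| <= `|g x|} -> M f /\ (N f <= N g)%E.
Proof. exact: bY.2.2.2.2.2.2.2.1. Qed.
Lemma Ycompl (u : nat -> T -> R) : (forall n, M (u n)) ->
   (forall e : R, 0 < e -> exists n0, forall m n, (n0 <= m)%N -> (n0 <= n)%N ->
      (N (fun x => (u n x - u m x)%R) < e%:E)%E) ->
   exists f, M f /\ forall e : R, 0 < e -> exists n0, forall n, (n0 <= n)%N ->
      (N (fun x => (u n x - f x)%R) < e%:E)%E.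
Proof. exact: bY.2.2.2.2.2.2.2.2. Qed.

Lemma Ycomb a b f g : M f -> M g -> M (fun x => a * f x + b * g x).
Proof. by move=> Mf Mg; apply: Yadd; apply: Yscale. Qed.

Lemma Ysub f g : M f -> M g -> M (fun x => f x - g x).
Proof.
move=> Mf Mg; have := Ycomb 1 (-1) Mf Mg.
by rewrite (_ : (fun x => _) = (fun x => f x - g x)) //; apply/funext => x; ring.
Qed.

Hypothesis Yn : exists g, M g.

Lemma Y0 : M (fun _ => 0) /\ N (fun _ => 0) = 0%E.
Proof.
have [g Mg] := Yn.
have e : (fun x => 0 * g x) = (fun _ => 0 : R) by apply/funext => x; rewrite mul0r.
split; first by rewrite -e; exact: Yscale.
by rewrite -e Yhom // normr0 mul0e.
Qed.

Lemma Yabs f : M f -> M (fun x => `|f x|) /\ (N (fun x => `|f x|%R) <= N f)%E.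
Proof.
move=> Mf; apply: Yideal => //; first by apply: mabs; exact: Ymeas.
by apply: nearW => x; rewrite normr_id.
Qed.


Lemma kdual_ge0 y' : fs_mem (kdual mu Y) y' -> (0 <= fs_norm (kdual mu Y) y')%E.
Proof.
move=> _; apply: ereal_sup_ubound; exists (fun _ => 0).
  by split; [exact: Y0.1|rewrite Y0.2 lee_fin].
by rewrite /=; under eq_integral do rewrite mulr0 normr0; exact: integral0.
Qed.

Lemma kdual_fin y' : fs_mem (kdual mu Y) y' -> (fs_norm (kdual mu Y) y' < +oo)%E.
Proof.
move=> [my' Hy'].
rewrite ltey; apply/negP => /eqP Hinf.
have ex : forall k : nat, exists f, [/\ M f, (N f <= 1)%E &
   ((((2:R) ^+ k * k.+1%:R)%:E < \int[mu]_x (`|y' x * f x|)%:E))%E].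
  move=> k; have : ((((2:R) ^+ k * k.+1%:R)%:E < fs_norm (kdual mu Y) y'))%E.
    by rewrite Hinf ltey.
  move=> /ereal_sup_gt [_ [f [Mf Nf] <-] lt]; exists f; split => //.
have [fk Hfk] := choice ex.
pose w k : R := ((2:R) ^+ k)^-1.
have w0 k : 0 < w k by rewrite /w invr_gt0 exprn_gt0.
have wS k : w k.+1 = w k / 2 by rewrite /w exprS invfM mulrC.
pose g k := fun x => w k * `|fk k x|.
have Mg k : M (g k) /\ (N (g k) <= (w k)%:E)%E.
  have [Mf Nf _] := Hfk k; have [Ma Na] := Yabs Mf.
  split; first exact: Yscale.
  rewrite Yhom // gtr0_norm //.
  apply: (le_trans (lee_wpmul2l _ (le_trans Na Nf))); first by rewrite lee_fin ltW.
  by rewrite mule1.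
have g0 k x : 0 <= g k x by apply: mulr_ge0; [exact: ltW|exact: normr_ge0].
have Ig k : ((k.+1%:R)%:E < \int[mu]_x (`|y' x * g k x|)%:E)%E.
  rewrite (_ : (fun x => _) = fun x => ((w k)%:E * (`|y' x * fk k x|)%:E)%E); last first.
    apply/funext => x; rewrite /g -EFinM; congr EFin.
    by rewrite !normrM normr_id (gtr0_norm (w0 k)); ring.
  have [Mfk _ lt] := Hfk k.
  have mk : measurable_fun setT (fun x => (`|y' x * fk k x|)%:E).
    by apply: mEabs; apply: mmul => //; exact: Ymeas Mfk.
  have nn : forall x, setT x -> (0 <= (`|y' x * fk k x|)%:E)%E.
    by move=> x _; rewrite lee_fin.
  rewrite (ge0_integralZl_EFin _ measurableT nn mk (ltW (w0 k))).
  rewrite -(@lte_pmul2l _ (w k)%:E) // ?lte_fin // -EFinM in lt.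
  by rewrite mulrA mulVf ?mul1r // in lt; rewrite expf_neq0.
pose u m := fun x => \sum_(0 <= k < m) g k x.
have Mu m : M (u m).
  elim: m => [|m IH].
    rewrite (_ : u 0%N = fun _ => 0); first exact: Y0.1.
    by apply/funext => x; rewrite /u big_geq.
  rewrite (_ : u m.+1 = fun x => u m x + g m x); first by apply: Yadd => //; exact: (Mg m).1.
  by apply/funext => x; rewrite /u big_nat_recr.
have u_ge k m x : (k < m)%N -> g k x <= u m x.
  move=> km; rewrite /u (big_cat_nat (leq0n k) (ltnW km)) /= [\sum_(k <= i < m) _](big_ltn km) /=.
  have h1 : 0 <= \sum_(0 <= i < k) g i x by apply: sumr_ge0 => i _.
  have h2 : 0 <= \sum_(k.+1 <= i < m) g i x by apply: sumr_ge0 => i _.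
  lra.
have tail m j : (N (fun x => (u (m + j)%N x - u m x)%R) <= (2 * w m - 2 * w (m + j)%N)%:E)%E.
  elim: j => [|j IH].
    rewrite addn0 subrr (_ : (fun x => _) = fun _ => 0); first by rewrite Y0.2.
    by apply/funext => x; rewrite subrr.
  rewrite addnS (_ : (fun x => _) = fun x => (u (m + j)%N x - u m x) + g (m + j)%N x); last first.
    by apply/funext => x; rewrite /u big_nat_recr //=; ring.
  apply: (le_trans (Ytri (Ysub (Mu _) (Mu _)) (Mg _).1)).
  apply: (le_trans (leeD IH (Mg _).2)); rewrite -EFinD lee_fin wS.
  lra.
have wle m j : w (m + j)%N <= w m.
  elim: j => [|j IH]; first by rewrite addn0.
  by rewrite addnS wS; have := w0 (m + j)%N; lra.
have cauchy : forall e : R, 0 < e -> exists n0, forall m n, (n0 <= m)%N -> (n0 <= n)%N ->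
      (N (fun x => (u n x - u m x)%R) < e%:E)%E.
  move=> e e0.
  have he : 0 <= 2 / e by rewrite divr_ge0 // ltW.
  pose n0 := Num.bound (2 / e).
  have h1 := archi_boundP he.
  have h2 : (n0%:R : R) < (2:R) ^+ n0 by rewrite -natrX ltr_nat ltn_expl.
  have h3 : 2 * w n0 < e.
    rewrite /w -/(2 / _) ltr_pdivrMr ?exprn_gt0 //.
    have : 2 / e < 2 ^+ n0 by lra.
    by rewrite ltr_pdivrMr // mulrC.
  exists n0 => m n hm hn; case: (leqP m n) => mn.
    rewrite -(subnKC mn); apply: (le_lt_trans (tail m (n - m)%N)); rewrite lte_fin.
    have := wle n0 (m - n0)%N; rewrite subnKC //.
    have := w0 (m + (n - m))%N; lra.
  rewrite (_ : (fun x => _) = fun x => -1 * (u m x - u n x)); last first.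
    by apply/funext => x; ring.
  rewrite Yhom; last exact: Ysub.
  rewrite normrN normr1 mul1e.
  rewrite -(subnKC (ltnW mn)); apply: (le_lt_trans (tail n (m - n)%N)); rewrite lte_fin.
  have := wle n0 (n - n0)%N; rewrite subnKC //.
  have := w0 (n + (m - n))%N; lra.
have [f [Mf fcv]] := Ycompl Mu cauchy.
have mf := Ymeas Mf.
have gf k : {ae mu, forall x, g k x <= f x}.
  pose a := fun x => g k x - f x.
  pose v := fun x => 2^-1 * (`|a x| + a x).
  have mv : measurable_fun setT v.
    apply: measurable_funM; first exact: measurable_cst.
    apply: measurable_funD; first apply: mabs.
      by apply: measurable_funB => //; exact: Ymeas (Mg k).1.
    by apply: measurable_funB => //; exact: Ymeas (Mg k).1.
  have bnd n : (k < n)%N -> {ae mu, forall x, `|v x| <= `|u n x - f x|}.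
    move=> kn; apply: nearW => x.
    have h1 := u_ge k n x kn; have h2 := ler_norm (u n x - f x).
    have h3 := normr_ge0 (u n x - f x).
    rewrite /v /a; case: (lerP 0 (g k x - f x)) => h.
      by rewrite (ger0_norm h) [X in X <= _]ger0_norm; lra.
    by rewrite (ltr0_norm h) [X in X <= _]ger0_norm; lra.
  have [Mv _] := Yideal mv (Ysub (Mu k.+1) Mf) (bnd _ (ltnSn k)).
  have Nv : N v = 0%E.
    apply/eqP; rewrite eq_le Yge0 // andbT; apply/lee_addgt0Pr => e e0; rewrite add0e.
    have [n0 Hn0] := fcv e e0.
    pose n := maxn n0 k.+1.
    have [_ Nvle] := Yideal mv (Ysub (Mu n) Mf) (bnd _ (leq_maxr n0 k.+1)).
    exact: (le_trans Nvle (ltW (Hn0 n (leq_maxl _ _)))).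
  have := (Yzero Mv).1 Nv; apply: filterS => x; rewrite /v /a => h.
  have := ler_norm (g k x - f x); lra.
have Iyf : (\int[mu]_x (`|y' x * f x|)%:E < +oo)%E := (Hy' f Mf).2.
have Ile k : (\int[mu]_x (`|y' x * g k x|)%:E <= \int[mu]_x (`|y' x * f x|)%:E)%E.
  apply: ae_ge0_le_integral => //.
  - by apply: mEabs; apply: mmul => //; exact: Ymeas (Mg k).1.
  - by apply: mEabs; apply: mmul.
  apply: filterS (gf k) => x h _; rewrite lee_fin (normrM (y' x) (g k x)) (normrM (y' x) (f x)) ler_wpM2l //.
  rewrite (ger0_norm (g0 k x)); exact: le_trans h (ler_norm _).
have I0 : (0 <= \int[mu]_x (`|y' x * f x|)%:E)%E.
  by apply: integral_ge0 => x _; rewrite lee_fin.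
have Ifin : (\int[mu]_x (`|y' x * f x|)%:E)%E \is a fin_num by rewrite ge0_fin_numE.
set r := fine (\int[mu]_x (`|y' x * f x|)%:E)%E.
have r0 : 0 <= r by rewrite /r fine_ge0.
have hk := archi_boundP r0.
have := lt_le_trans (Ig (Num.bound r)) (Ile (Num.bound r)).
rewrite -(fineK Ifin) -/r lte_fin mulrS.
lra.
Qed.

End bfs.


Section main.
Context {R : realType} {d1 d2 : measure_display} {Om : measurableType d1}
  {Dl : measurableType d2} (mu : {measure set Om -> \bar R})
  (nu : {measure set Dl -> \bar R}) (X1 X2 : fspace R Om) (Y1 Y2 : fspace R Dl)
  (T S : (Om -> R) -> (Dl -> R)) (h : Om -> R).
Hypotheses (bY1 : is_bfs nu Y1) (bY2 : is_bfs nu Y2).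
Hypotheses (Y1n : exists g, fs_mem Y1 g) (Y2n : exists g, fs_mem Y2 g).
Local Notation K := (kdual nu Y1).
Local Notation pin := (pi_norm nu Y2 K).
Local Notation PP := (fs_mem (piprod nu Y2 K)).
Local Notation cmb := (@comb R Dl).
Local Notation good := (@good R Dl).

Lemma Kz : fs_mem K (fun _ => 0).
Proof.
split; first exact: measurable_cst.
move=> f Yf; have mf := Ymeas bY1 Yf.
split; first by apply: mmul => //; exact: measurable_cst.
rewrite /= (_ : (fun x => _) = fun _ => 0%E); first by rewrite integral0 ltry.
by apply/funext => x; rewrite mul0r normr0.
Qed.

Lemma Kscale (c : R) y' : fs_mem K y' -> fs_mem K (fun t => c * y' t).
Proof.
move=> [my' Hy']; split; first by apply: mmul => //; exact: measurable_cst.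
move=> f Yf; have [mf If] := Hy' f Yf; have mf' := Ymeas bY1 Yf.
split; first by apply: mmul => //; apply: mmul => //; exact: measurable_cst.
rewrite /= (_ : (fun x => _) = fun x => ((`|c|)%:E * (`|y' x * f x|)%:E)%E); last first.
  by apply/funext => x; rewrite -EFinM -normrM mulrA.
have nn : forall x, setT x -> (0 <= (`|y' x * f x|)%:E)%E by move=> x _; rewrite lee_fin.
rewrite (ge0_integralZl_EFin _ measurableT nn (mEabs mf) (normr_ge0 c)).
by apply: lte_mul_pinfty => //; rewrite lee_fin.
Qed.

Lemma A0 : forall f, fs_mem Y2 f -> (0 <= fs_norm Y2 f)%E.
Proof. by move=> f Hf; exact: (Yge0 bY2 Hf). Qed.
Lemma B0 : forall g, fs_mem K g -> (0 <= fs_norm K g)%E.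
Proof. by move=> g Hg; exact: (kdual_ge0 bY1 Y1n Hg). Qed.
Lemma Az : fs_mem Y2 (fun _ => 0) /\ fs_norm Y2 (fun _ => 0) = 0%E.
Proof. exact: (Y0 bY2 Y2n). Qed.
Lemma Bn : exists g, fs_mem K g.
Proof. by exists (fun _ => 0); exact: Kz. Qed.
Lemma As : forall (a : R) f, fs_mem Y2 f ->
  fs_mem Y2 (fun x => a * f x) /\ fs_norm Y2 (fun x => a * f x) = (`|a|%:E * fs_norm Y2 f)%E.
Proof. by move=> a f Hf; split; [exact: (Yscale bY2 a Hf)|exact: (Yhom bY2 a Hf)]. Qed.

Lemma pin_ge0 f : (0 <= pin f)%E.
Proof. exact: pn_ge0 nu Y2 K A0 B0 f. Qed.

Lemma pin_fin f : PP f -> pin f \is a fin_num.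
Proof. by move=> [_ Hf]; rewrite ge0_fin_numE // pin_ge0. Qed.

Lemma zeroP : PP (fun _ => 0).
Proof.
split; first exact: measurable_cst.
by rewrite (pn_zero nu Y2 K A0 B0 Az Bn) ltry.
Qed.

Lemma combP (a b : R) f g : PP f -> PP g -> PP (fun t => a * f t + b * g t).
Proof.
move=> [mf Hf] [mg Hg]; split; first exact: mcomb.
apply: le_lt_trans (pn_add nu Y2 K A0 B0 (fun x => a * f x) (fun x => b * g x)) _.
apply: lte_add_pinfty.
  apply: le_lt_trans (pn_scale nu Y2 K A0 B0 Az Bn As a f) _.
  by apply: lte_mul_pinfty => //; rewrite lee_fin.
apply: le_lt_trans (pn_scale nu Y2 K A0 B0 Az Bn As b g) _.
by apply: lte_mul_pinfty => //; rewrite lee_fin.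
Qed.

Lemma addP f g : PP f -> PP g -> PP (fun t => f t + g t).
Proof.
move=> Pf Pg; have := combP 1 1 Pf Pg.
by rewrite (_ : (fun t => _) = (fun t => f t + g t)) //; apply/funext => t; rewrite !mul1r.
Qed.

Lemma sumP n (F : 'I_n -> Dl -> R) : (forall i, PP (F i)) -> PP (fun t => \sum_(i < n) F i t).
Proof.
elim: n F => [|n IH] F HF.
  rewrite (_ : (fun t => _) = fun _ => 0); first exact: zeroP.
  by apply/funext => t; rewrite big_ord0.
rewrite (_ : (fun t => _) = fun t => \sum_(i < n) F (widen_ord (leqnSn n) i) t + F ord_max t).
  by apply: addP => //; apply: IH => i.
by apply/funext => t; rewrite big_ord_recr.
Qed.

Lemma pin_hom (t : R) f : 0 < t -> PP f -> pin (fun x => t * f x) = (t%:E * pin f)%E.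
Proof.
move=> t0 Pf; apply/eqP; rewrite eq_le; apply/andP; split.
  by have := pn_scale nu Y2 K A0 B0 Az Bn As t f; rewrite gtr0_norm.
have := pn_scale nu Y2 K A0 B0 Az Bn As t^-1 (fun x => t * f x).
rewrite (_ : (fun x => _) = f); last first.
  by apply/funext => x; rewrite mulrA mulVf ?mul1r // gt_eqF.
by rewrite gtr0_norm ?invr_gt0 // lee_pdivlMl.
Qed.


Hypothesis cT : is_clop mu nu X1 Y1 T.
Hypothesis cS : is_clop mu nu X2 Y2 S.
Hypothesis Hh : fs_mem (ydual X1 X2) h.

Lemma termP x y' : fs_mem X1 x -> fs_mem K y' ->
  PP (fun t => S (fun s => h s * x s) t * y' t).
Proof.
move=> Hx Hy.
have X2hx := Hh.2 x Hx.
have [S1 _ _ _] := cS.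
have Y2S := S1 _ X2hx.
split; first by apply: mmul; [exact: (Ymeas bY2 Y2S)|exact: Hy.1].
apply: le_lt_trans (pn_single nu Y2 K A0 B0 Az _ _ Y2S Hy) _.
apply: lte_mul_pinfty; first exact: A0.
  by rewrite ge0_fin_numE ?A0 //; exact: (Yfin bY2 Y2S).
exact: (kdual_fin bY1 Y1n Hy).
Qed.

Lemma KintT x y' : fs_mem X1 x -> fs_mem K y' ->
  nu.-integrable setT (EFin \o (fun t => T x t * y' t)).
Proof.
move=> Hx [my' Hy].
have [T1 _ _ _] := cT.
have Y1T := T1 _ Hx.
have [mm Ii] := Hy _ Y1T.
apply/integrableP; split.
  by apply/measurable_EFinP; apply: mmul => //; exact: (Ymeas bY1 Y1T).
rewrite (eq_integral (fun t => (`|y' t * T x t|)%:E)) //.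
by move=> t _; rewrite /= mulrC.
Qed.

Lemma xi_sum (xi : (Dl -> R) -> R) :
  (forall a b f g, PP f -> PP g -> xi (fun x => a * f x + b * g x) = a * xi f + b * xi g) ->
  forall n (F : 'I_n -> Dl -> R), (forall i, PP (F i)) ->
  xi (fun t => \sum_(i < n) F i t) = \sum_(i < n) xi (F i).
Proof.
move=> lin; elim=> [|n IH] F HF.
  rewrite big_ord0 (_ : (fun t => _) = fun t => 0 * (fun _ => 0) t + 0 * (fun _ => 0) t).
    by rewrite lin ?mul0r ?addr0 //; exact: zeroP.
  by apply/funext => t; rewrite big_ord0 mul0r addr0.
rewrite big_ord_recr /= -IH; last by move=> i.
rewrite (_ : (fun t => _) = fun t => 1 * (fun t => \sum_(i < n) F (widen_ord (leqnSn n) i) t) t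
                                  + 1 * F ord_max t).
  by rewrite lin ?mul1r //; apply: sumP => i.
by apply/funext => t; rewrite big_ord_recr /= !mul1r.
Qed.

Lemma b_a : (exists xi, dual_elem (piprod nu Y2 K) xi /\
     forall x, fs_mem X1 x ->
       forall y', fs_mem K y' ->
         eta_map nu (T x) y' = Rxi xi (S (fun s => h s * x s)) y') ->
  (exists C : R, 0 < C /\
     forall (n : nat) (x : 'I_n -> Om -> R) (y' : 'I_n -> Dl -> R),
       (forall i, fs_mem X1 (x i)) -> (forall i, fs_mem K (y' i)) ->
       ((\sum_(i < n) Rintegral nu setT (fun t => T (x i) t * y' i t))%:E
         <= C%:E * pin
              (fun t => (\sum_(i < n) S (fun s => h s * x i s) t * y' i t)%R))%E).
Proof.
move=> [xi [[lin [C0 bnd]] Hid]].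
exists (`|C0| + 1); split; first by have := normr_ge0 C0; lra.
move=> n x y' Hx Hy.
have PF i := termP (Hx i) (Hy i).
rewrite (eq_bigr (fun i => xi (fun t => S (fun s => h s * x i s) t * y' i t))); last first.
  by move=> i _; exact: Hid (Hx i) _ (Hy i).
rewrite -(xi_sum lin PF).
have PG := sumP PF.
apply: (@le_trans _ _ ((`|xi (fun t => \sum_(i < n) S (fun s => h s * x i s) t * y' i t)|)%:E)).
  by rewrite lee_fin ler_norm.
apply: le_trans (bnd _ PG) _.
apply: lee_wpmul2r; first exact: pin_ge0.
by rewrite lee_fin; have := ler_norm C0; lra.
Qed.


Hypothesis X1n : exists x0, fs_mem X1 x0.

Lemma a_b : (exists C : R, 0 < C /\
     forall (n : nat) (x : 'I_n -> Om -> R) (y' : 'I_n -> Dl -> R),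
       (forall i, fs_mem X1 (x i)) -> (forall i, fs_mem K (y' i)) ->
       ((\sum_(i < n) Rintegral nu setT (fun t => T (x i) t * y' i t))%:E
         <= C%:E * pin
              (fun t => (\sum_(i < n) S (fun s => h s * x i s) t * y' i t)%R))%E) ->
  (exists xi, dual_elem (piprod nu Y2 K) xi /\
     forall x, fs_mem X1 x ->
       forall y', fs_mem K y' ->
         eta_map nu (T x) y' = Rxi xi (S (fun s => h s * x s)) y').
Proof.
move=> [C [C0 Ha]].
pose V := fun f => PP f.
pose p := fun f => C * fine (pin f).
have Vcomb : forall a b f g, V f -> V g -> V (cmb a f b g).
  by move=> a b f g Pf Pg; exact: combP.
have p_sub : forall f g, V f -> V g -> p (fun x => f x + g x) <= p f + p g.
  move=> f g Pf Pg; rewrite /p -mulrDr; apply: ler_wpM2l; first exact: ltW.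
  rewrite -fineD ?pin_fin //.
  have H3 := pn_add nu Y2 K A0 B0 f g.
  have H2 : (pin f + pin g)%E \is a fin_num by rewrite fin_numD !pin_fin.
  exact: (fine_le (pin_fin (addP Pf Pg)) H2 H3).
have p_hom : forall (t : R) f, 0 < t -> V f -> p (fun x => t * f x) = t * p f.
  move=> t f t0 Pf; rewrite /p pin_hom // fineM ?pin_fin //=; ring.
pose G0 := [set fa : (Dl -> R) * R | exists n (x : 'I_n -> Om -> R) (y' : 'I_n -> Dl -> R),
  [/\ forall i, fs_mem X1 (x i), forall i, fs_mem K (y' i) &
   fa = ((fun t => \sum_(i < n) S (fun s => h s * x i s) t * y' i t),
         \sum_(i < n) Rintegral nu setT (fun t => T (x i) t * y' i t))]].
have goodG0 : good V p G0.
  split.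
  - move=> _ [n [x [y' [Hx Hy ->]]]] /=; apply: sumP => i; exact: termP.
  - move=> a b fa gb [n [x [y' [Hx Hy ->]]]] [m [x2 [y2 [Hx2 Hy2 ->]]]] /=.
    exists (n + m)%N.
    pose z := fun k : 'I_(n + m) => match fintype.split k with inl i => x i | inr j => x2 j end.
    pose w := fun k : 'I_(n + m) => match fintype.split k with
                inl i => (fun t => a * y' i t) | inr j => (fun t => b * y2 j t) end.
    exists z, w; split.
    + by move=> k; rewrite /z; case: (fintype.split k) => i.
    + by move=> k; rewrite /w; case: (fintype.split k) => i; apply: Kscale.
    + congr pair.
        apply/funext => t; apply: esym; rewrite /comb big_split_ord /=.
        rewrite (eq_bigr (fun i => a * (S (fun s => h s * x i s) t * y' i t))); last first.
          by move=> i _; rewrite /z /w (unsplitK (inl _ i)) /=; ring.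
        rewrite [X in _ + X](eq_bigr (fun i => b * (S (fun s => h s * x2 i s) t * y2 i t))); last first.
          by move=> i _; rewrite /z /w (unsplitK (inr _ i)) /=; ring.
        by rewrite -!mulr_sumr.
      apply: esym; rewrite big_split_ord /=.
      rewrite (eq_bigr (fun i => a * Rintegral nu setT (fun t => T (x i) t * y' i t))); last first.
        move=> i _; rewrite /z /w (unsplitK (inl _ i)) /=.
        rewrite (_ : (fun t => _) = fun t => a * (T (x i) t * y' i t)); last first.
          by apply/funext => t; ring.
        by rewrite RintegralZl //; exact: KintT.
      rewrite [X in _ + X](eq_bigr (fun i => b * Rintegral nu setT (fun t => T (x2 i) t * y2 i t))); last first.
        move=> i _; rewrite /z /w (unsplitK (inr _ i)) /=.
        rewrite (_ : (fun t => _) = fun t => b * (T (x2 i) t * y2 i t)); last first.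
          by apply/funext => t; ring.
        by rewrite RintegralZl //; exact: KintT.
      by rewrite -!mulr_sumr.
  - move=> _ [n [x [y' [Hx Hy ->]]]] /=.
    have PF : PP (fun t => \sum_(i < n) S (fun s => h s * x i s) t * y' i t).
      by apply: sumP => i; exact: termP.
    have := Ha n x y' Hx Hy.
    by rewrite -(fineK (pin_fin PF)) -EFinM lee_fin.
have G0n : exists fa, G0 fa.
  have [x0 Hx0] := X1n.
  exists ((fun t => \sum_(i < 0) S (fun s => h s * x0 s) t * 0),
          \sum_(i < 0) Rintegral nu setT (fun t => T x0 t * 0)).
  exists 0%N, (fun _ => x0), (fun _ _ => 0); split => //; by case.
have [xi [lin dom ext]] := @HB_ext R Dl V p Vcomb p_sub p_hom G0 goodG0 G0n.
exists xi; split.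
  split; first exact: lin.
  exists C => f Pf.
  have h1 := dom f Pf.
  have h2 := dom (cmb (-1) f 0 f) (Vcomb _ _ _ _ Pf Pf).
  rewrite lin // in h2.
  have pe : p (cmb (-1) f 0 f) = p f.
    rewrite /p; congr (_ * fine _); apply/eqP; rewrite eq_le; apply/andP; split;
      apply: pn_le_ae; apply: nearW => t; rewrite /comb mul0r addr0 mulN1r normrN //.
  rewrite pe /p in h2; rewrite /p in h1.
  rewrite /= -(fineK (pin_fin Pf)) -EFinM lee_fin ler_norml.
  apply/andP; split; lra.
move=> x Hx y' Hy.
have G1 : G0 ((fun t => \sum_(i < 1) S (fun s => h s * (fun _ : 'I_1 => x) i s) t * (fun _ : 'I_1 => y') i t),
      \sum_(i < 1) Rintegral nu setT (fun t => T ((fun _ : 'I_1 => x) i) t * (fun _ : 'I_1 => y') i t)).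
  by exists 1%N, (fun _ => x), (fun _ => y').
rewrite /eta_map /Rxi.
have := ext _ G1; rewrite /= big_ord1 => <-; congr xi.
by apply/funext => t; rewrite big_ord1.
Qed.

End main.

Unset Implicit Arguments.
Set Strict Implicit.

Theorem theorem3p1 (R : realType) (d1 d2 : measure_display)
  (Om : measurableType d1) (Dl : measurableType d2)
  (mu : {measure set Om -> \bar R}) (nu : {measure set Dl -> \bar R})
  (X1 X2 : fspace R Om) (Y1 Y2 : fspace R Dl)
  (T : (Om -> R) -> (Dl -> R)) (S : (Om -> R) -> (Dl -> R)) (h : Om -> R) :
  sigma_finite setT mu -> sigma_finite setT nu ->
  is_bfs mu X1 -> saturated mu X1 -> is_bfs mu X2 -> saturated mu X2 ->
  is_bfs nu Y1 -> saturated nu Y1 -> is_bfs nu Y2 -> saturated nu Y2 ->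
  is_clop mu nu X1 Y1 T -> nontrivial_op nu X1 T ->
  is_clop mu nu X2 Y2 S -> nontrivial_op nu X2 S ->
  saturated nu (ydual Y2 (kdual nu (kdual nu Y1))) ->
  fs_mem (ydual X1 X2) h ->
  (exists C : R, 0 < C /\
     forall (n : nat) (x : 'I_n -> Om -> R) (y' : 'I_n -> Dl -> R),
       (forall i, fs_mem X1 (x i)) -> (forall i, fs_mem (kdual nu Y1) (y' i)) ->
       ((\sum_(i < n) Rintegral nu setT (fun t => T (x i) t * y' i t))%:E
         <= C%:E * pi_norm nu Y2 (kdual nu Y1)
              (fun t => (\sum_(i < n) S (fun s => h s * x i s) t * y' i t)%R))%E)
  <->
  (exists xi, dual_elem (piprod nu Y2 (kdual nu Y1)) xi /\
     forall x, fs_mem X1 x ->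
       forall y', fs_mem (kdual nu Y1) y' ->
         eta_map nu (T x) y' = Rxi xi (S (fun s => h s * x s)) y').
Proof.
move=> _ _ bX1 _ bX2 _ bY1 _ bY2 _ cT [x0 [X1x0 _]] cS [x0' [X2x0' _]] _ Hh.
have Y1n : exists g, fs_mem Y1 g by exists (T x0); case: cT => + _ _ _; apply.
have Y2n : exists g, fs_mem Y2 g by exists (S x0'); case: cS => + _ _ _; apply.
split.
  exact: (a_b bY1 bY2 Y1n Y2n cT cS Hh (ex_intro _ x0 X1x0)).
exact: (b_a bY1 bY2 Y1n Y2n cS Hh).
Qed.
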